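(* Let $A$ be a finite poset and let $k\in\mathbb N$ satisfy $2^k\ge|A|$. Define $B:=A/C_{2^k-1}$, $C:=B+C_{2^k}$, $D:=C/C_1$, and $\neg A:=D+A$ (with all constituent posets taken disjoint, in particular a fresh disjoint copy of $A$ in the last step). Then $g(\neg A)=0$ if $g(A)\ne0$, and $g(\neg A)=2^{k+1}$ if $g(A)=0$. In particular $\neg A$ is a $\forall$-game iff $A$ is an $\exists$-game.
   Context: For a finite poset $P$ and $x\in P$ let $P_x:=\{y\in P: x\not\le y\}$. The poset game on $P$: players alternately replace the current poset $Q$ by some $Q_x$; the first player unable to move loses; $P$ is an $\exists$-game if the first player wins, else a $\forall$-game. The g-number is $g(P):=\operatorname{mex}\{g(P_x):x\in P\}$ (mex = least natural number not in the set; $g(\emptyset)=0$), and $P$ is a $\forall$-game iff $g(P)=0$. $P+Q$ (parallel union) is the disjoint union with points of $P$ incomparable to points of $Q$; $P/Q$ (series union) is the disjoint union with every point of $P$ above every point of $Q$. $C_m$ is the chain with $m$ points ($C_0=\emptyset$). *)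

(* Defs.v *)
(* A finite poset is a finType T with a relation le : rel T
   (x <= y); the poset axioms are hypotheses of the theorem. *)
From mathcomp Require Import all_boot.
Set Implicit Arguments. Unset Strict Implicit. Unset Printing Implicit Defensive.

Definition mex (s : seq nat) : nat :=
  find (fun n => n \notin s) (iota 0 (size s).+1).

(* g-number of the subposet S (with the induced order), computed with fuel;
   a move at x replaces S by S minus the up-set of x, i.e. Q_x = {y in Q | ~ x <= y}. *)
Fixpoint gfuel (T : finType) (le : rel T) (n : nat) (S : {set T}) : nat :=
  match n with
  | 0 => 0
  | n.+1 => mex [seq gfuel le n (S :\: [set y | le x y]) | x <- enum S]
  end.

(* g(P) for the poset (T, le); fuel #|T| suffices since each move removes x. *)
Definition g (T : finType) (le : rel T) : nat := gfuel le #|T| [set: T].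

Definition parallel (T1 T2 : Type) (r1 : rel T1) (r2 : rel T2) : rel (T1 + T2) :=
  fun a b => match a, b with
  | inl x, inl y => r1 x y
  | inr x, inr y => r2 x y
  | _, _ => false
  end.

(* series union P / Q : every point of P (inl) above every point of Q (inr) *)
Definition series (T1 T2 : Type) (r1 : rel T1) (r2 : rel T2) : rel (T1 + T2) :=
  fun a b => match a, b with
  | inl x, inl y => r1 x y
  | inr x, inr y => r2 x y
  | inr _, inl _ => true
  | inl _, inr _ => false
  end.

Definition chain (m : nat) : rel 'I_m := fun i j => (i <= j)%N.
Arguments chain m : clear implicits.

Definition negA (T : finType) (le : rel T) (k : nat)
  : rel (((((T + ordinal (2 ^ k - 1)) + ordinal (2 ^ k)) + ordinal 1) + T)%type) :=
  parallel (series (parallel (series le (chain (2 ^ k - 1))) (chain (2 ^ k)))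
                   (chain 1)) le.
Arguments negA {T} le k.

(* Main.v *)
From Stdlib Require Import Arith Lia.

Ltac xbits := apply Nat.bits_inj; intro; rewrite ?Nat.lxor_spec;
  repeat match goal with |- context [Nat.testbit ?a ?n] => destruct (Nat.testbit a n) end; reflexivity.

Lemma lt_bits x y : Nat.lxor x y <> 0 ->
  Nat.testbit y (Nat.log2 (Nat.lxor x y)) = true -> x < y.
Proof.
  intros Hd Hy. set (h := Nat.log2 (Nat.lxor x y)) in *.
  assert (Hh := Nat.bit_log2 _ Hd). fold h in Hh. rewrite Nat.lxor_spec, Hy in Hh.
  assert (Hx : Nat.testbit x h = false)
    by (destruct (Nat.testbit x h); simpl in Hh; congruence).
  assert (Hq : Nat.shiftr x (S h) = Nat.shiftr y (S h)).
  { apply Nat.bits_inj; intro i. rewrite !Nat.shiftr_spec'.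
    assert (E := Nat.bits_above_log2 (Nat.lxor x y) (i + S h) ltac:(unfold h in *; lia)).
    rewrite Nat.lxor_spec in E.
    destruct (Nat.testbit x (i + S h)), (Nat.testbit y (i + S h)); simpl in E; congruence. }
  rewrite !Nat.shiftr_div_pow2 in Hq.
  assert (Ex := Nat.testbit_spec' x h). assert (Ey := Nat.testbit_spec' y h).
  rewrite Hx in Ex; rewrite Hy in Ey. cbn [Nat.b2n] in Ex, Ey.
  rewrite Nat.pow_succ_r', Nat.mul_comm, <- !Nat.Div0.div_div in Hq.
  assert (HX := Nat.div_mod_eq (x / 2 ^ h) 2).
  assert (HY := Nat.div_mod_eq (y / 2 ^ h) 2).
  destruct (le_lt_dec y x) as [Hle|]; [|assumption].
  assert (Hm := Nat.Div0.div_le_mono _ _ (2 ^ h) Hle). lia.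
Qed.

Lemma xor_lt a b c : c < Nat.lxor a b -> Nat.lxor c b < a \/ Nat.lxor a c < b.
Proof.
  intro Hc. set (d := Nat.lxor c (Nat.lxor a b)).
  assert (Hd : d <> 0).
  { intro E. apply Nat.lxor_eq in E. lia. }
  set (h := Nat.log2 d).
  assert (Hh := Nat.bit_log2 _ Hd). fold h in Hh. unfold d in Hh.
  rewrite !Nat.lxor_spec in Hh.
  assert (Hab : xorb (Nat.testbit a h) (Nat.testbit b h) = true).
  { destruct (xorb (Nat.testbit a h) (Nat.testbit b h)) eqn:E; [reflexivity|].
    assert (Hc' : Nat.testbit c h = true)
      by (destruct (Nat.testbit c h); simpl in Hh; congruence).
    exfalso. assert (Nat.lxor a b < c); [|lia].
    assert (Ed : Nat.lxor (Nat.lxor a b) c = d) by (unfold d; xbits).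
    apply lt_bits; rewrite Ed; [exact Hd | exact Hc']. }
  destruct (Nat.testbit a h) eqn:Ea.
  - left. assert (Nat.lxor (Nat.lxor c b) a = d) by (unfold d; xbits).
    apply lt_bits; rewrite H; [exact Hd | exact Ea].
  - right. assert (Nat.lxor (Nat.lxor a c) b = d) by (unfold d; xbits).
    simpl in Hab. apply lt_bits; rewrite H; [exact Hd | exact Hab].
Qed.

Lemma land_pow_lt k r : r < 2 ^ k -> Nat.land (2 ^ k) r = 0.
Proof.
  intro Hr. apply Nat.bits_inj_0; intro i. rewrite Nat.land_spec, Nat.pow2_bits_eqb.
  destruct (Nat.eqb_spec k i); [subst|reflexivity].
  destruct (Nat.eq_dec r 0); [subst; rewrite Nat.bits_0; apply Bool.andb_false_r|].
  rewrite Nat.bits_above_log2; [apply Bool.andb_false_r|].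
  apply Nat.log2_lt_pow2; lia.
Qed.

Lemma xor_add_pow k r : r < 2 ^ k -> Nat.lxor (2 ^ k + r) (2 ^ k) = r.
Proof.
  intro Hr. rewrite Nat.add_nocarry_lxor by (apply land_pow_lt; auto). xbits.
Qed.

Lemma add_pow_xor k : Nat.lxor (2 ^ k - 1) (2 ^ k) = 2 ^ k - 1 + 2 ^ k.
Proof.
  rewrite Nat.add_comm, Nat.add_nocarry_lxor, Nat.lxor_comm; auto.
  apply land_pow_lt. assert (H := Nat.pow_nonzero 2 k). lia.
Qed.

Lemma lxor_inj_r a a' b : Nat.lxor a b = Nat.lxor a' b -> a = a'.
Proof.
  intro E. rewrite <- (Nat.lxor_0_r a), <- (Nat.lxor_nilpotent b), <- Nat.lxor_assoc, E. xbits.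
Qed.
Lemma lxor_inj_l a b b' : Nat.lxor a b = Nat.lxor a b' -> b = b'.
Proof. rewrite !(Nat.lxor_comm a). apply lxor_inj_r. Qed.

Lemma final_arith k a : a <= 2 ^ k ->
  (a = 0 -> Nat.lxor (1 + Nat.lxor (2 ^ k - 1 + a) (2 ^ k)) a = 2 ^ (S k)) /\
  (a <> 0 -> Nat.lxor (1 + Nat.lxor (2 ^ k - 1 + a) (2 ^ k)) a = 0).
Proof.
  intro Ha. assert (Hp := Nat.pow_nonzero 2 k ltac:(lia)). split; intro H0.
  - subst a. rewrite Nat.add_0_r, add_pow_xor, Nat.lxor_0_r, Nat.pow_succ_r'. lia.
  - replace (2 ^ k - 1 + a) with (2 ^ k + (a - 1)) by lia.
    rewrite xor_add_pow by lia. replace (1 + (a - 1)) with a by lia.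
    apply Nat.lxor_nilpotent.
Qed.

Require Import Defs.
From mathcomp Require Import all_boot zify.

Lemma expE k : 2 ^ k = Nat.pow 2 k.
Proof. elim: k => // k IH. by rewrite expnS IH. Qed.

Lemma mex_has s : has (fun n => n \notin s) (iota 0 (size s).+1).
Proof.
apply/negPn/negP => /hasPn H.
have : {subset iota 0 (size s).+1 <= s} by move=> i /H; rewrite negbK.
by move/(uniq_leq_size (iota_uniq _ _)); rewrite size_iota ltnn.
Qed.

Lemma mex_notin s : mex s \notin s.
Proof.
have H := mex_has s; have := nth_find 0 H.
rewrite nth_iota ?add0n //.
by move: H; rewrite has_find size_iota.
Qed.

Lemma mex_lt s m : m < mex s -> m \in s.
Proof.
move=> Hm; have := before_find 0 Hm; rewrite nth_iota ?add0n => [/negbFE //|].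
have := find_size (fun n => n \notin s) (iota 0 (size s).+1); rewrite size_iota => H.
exact: leq_trans Hm H.
Qed.

Lemma mex_eq s n : n \notin s -> (forall m, m < n -> m \in s) -> mex s = n.
Proof.
move=> Hn Hlt; case: (ltngtP (mex s) n) => // H.
- by move: (mex_notin s); rewrite (Hlt _ H).
- by move: Hn; rewrite (mex_lt _ _ H).
Qed.

Lemma mex_le s : mex s <= size s.
Proof.
have := mex_has s; rewrite has_find size_iota ltnS //.
Qed.

Definition up {T : finType} (le : rel T) (x : T) : {set T} := [set y | le x y].
Definition gv {T : finType} (le : rel T) (S : {set T}) := gfuel le #|S| S.

Lemma card_move {T : finType} {le : rel T} (le_refl : reflexive le) {S : {set T}} {x} :
  x \in S -> #|S :\: up le x| < #|S|.
Proof.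
move=> xS; rewrite (cardsD1 x S) xS add1n ltnS; apply: subset_leq_card.
apply/subsetP=> y; rewrite !inE => /andP[nxy ->]; rewrite andbT.
by apply: contraNneq nxy => ->; apply: le_refl.
Qed.

Lemma gfuel_stable {T : finType} {le : rel T} (le_refl : reflexive le) n m (S : {set T}) :
  #|S| <= n -> #|S| <= m -> gfuel le n S = gfuel le m S.
Proof.
elim: n m S => [|n IH] [|m] S //= Hn Hm.
- have -> : enum S = [::] by apply/nilP; rewrite /nilp -cardE; lia.
  by [].
- have -> : enum S = [::] by apply/nilP; rewrite /nilp -cardE; lia.
  by [].
- congr mex; apply/eq_in_map => x; rewrite mem_enum => xS.
  have := card_move le_refl xS; rewrite /up => H.
  apply: IH; lia.
Qed.

Lemma gv_rec {T : finType} {le : rel T} (le_refl : reflexive le) (S : {set T}) :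
  gv le S = mex [seq gv le (S :\: up le x) | x <- enum S].
Proof.
rewrite /gv (gfuel_stable le_refl #|S| #|S|.+1 S) //=.
congr mex; apply/eq_in_map => x; rewrite mem_enum => xS.
apply: gfuel_stable => //; exact/ltnW/card_move.
Qed.


Lemma gvP {T : finType} {le : rel T} (le_refl : reflexive le) (S : {set T}) n :
  (forall x, x \in S -> gv le (S :\: up le x) != n) ->
  (forall m, m < n -> exists2 x, x \in S & gv le (S :\: up le x) = m) ->
  gv le S = n.
Proof.
move=> H1 H2; rewrite (gv_rec le_refl); apply: mex_eq.
- apply/negP => /mapP [x]; rewrite mem_enum => xS En.
  by move: (H1 x xS); rewrite -En eqxx.
- move=> m /H2 [x xS E]; apply/mapP; exists x; rewrite ?mem_enum // E.
Qed.

Lemma gv_opt {T : finType} {le : rel T} (le_refl : reflexive le) (S : {set T}) m :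
  m < gv le S -> exists2 x, x \in S & gv le (S :\: up le x) = m.
Proof.
move=> H; rewrite (gv_rec le_refl) in H.
case/mapP: (mex_lt _ _ H) => x; rewrite mem_enum => xS ->; by exists x.
Qed.

Lemma gv_opt_ne {T : finType} {le : rel T} (le_refl : reflexive le) (S : {set T}) x :
  x \in S -> gv le (S :\: up le x) != gv le S.
Proof.
move=> xS; apply/negP => /eqP E.
have := mex_notin [seq gv le (S :\: up le y) | y <- enum S].
rewrite -(gv_rec le_refl) => /negP; apply; apply/mapP; exists x.
  by rewrite mem_enum.
by rewrite E.
Qed.

Lemma gv0 {T : finType} {le : rel T} (le_refl : reflexive le) : gv le (set0 : {set T}) = 0.
Proof. by rewrite (gv_rec le_refl) enum_set0. Qed.

Lemma gv_le_card {T : finType} {le : rel T} (le_refl : reflexive le) (S : {set T}) :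
  gv le S <= #|S|.
Proof. rewrite (gv_rec le_refl); apply: leq_trans (mex_le _) _; by rewrite size_map -cardE. Qed.

Lemma g_gv {T : finType} (le : rel T) : g le = gv le [set: T].
Proof. by rewrite /g /gv cardsT. Qed.

Lemma chain_refl m : reflexive (chain m).
Proof. by move=> i; rewrite /chain leqnn. Qed.

Lemma gv_chain m (S : {set 'I_m}) : gv (chain m) S = #|S|.
Proof.
move: (leqnn #|S|); move: {2}#|S| => n; elim: n S => [|n IH] S HS.
  have -> : S = set0 by apply/eqP; rewrite -cards_eq0; lia.
  by rewrite (gv0 (chain_refl m)) cards0.
case: (set_0Vmem S) => [->|[x0 x0S]]; first by rewrite (gv0 (chain_refl m)) cards0.
case: (arg_maxnP (fun i : 'I_m => nat_of_ord i) x0S) => M MS0 Mmax.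
have MS : M \in S := MS0.
have HSM : S :\: up (chain m) M = S :\ M.
  apply/setP => y; rewrite !inE /chain; case yS: (y \in S); rewrite ?andbT ?andbF //.
  have := Mmax y yS; rewrite -val_eqE /=; lia.
have HSx : forall x, x \in S :\ M -> S :\: up (chain m) x = (S :\ M) :\: up (chain m) x.
  move=> x; rewrite !inE => /andP[xM xS]; apply/setP => y; rewrite !inE /chain.
  case yS: (y \in S); rewrite ?andbT ?andbF //.
  case: (eqVneq y M) => [->|_]; rewrite ?andbT ?andbF //.
  have H : x <= M := Mmax x xS; by rewrite H.
have cS : #|S| = #|S :\ M|.+1 by rewrite (cardsD1 M S) MS.
apply: (gvP (chain_refl m)).
- move=> x xS; rewrite IH; last first.
    by rewrite -ltnS (leq_trans (card_move (chain_refl m) xS) HS).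
  by rewrite neq_ltn (card_move (chain_refl m) xS).
- move=> k; rewrite cS ltnS leq_eqVlt => /orP[/eqP ->|Hk].
    by exists M => //; rewrite HSM IH //; lia.
  have IHM : gv (chain m) (S :\ M) = #|S :\ M| by apply: IH; lia.
  rewrite -IHM in Hk; case: (gv_opt (chain_refl m) _ _ Hk) => x xS E.
  exists x; first by move: xS; rewrite !inE => /andP[].
  by rewrite HSx.
Qed.

Definition SL {T1 T2 : finType} (S : {set T1 + T2}) : {set T1} := [set x | inl x \in S].
Definition SR {T1 T2 : finType} (S : {set T1 + T2}) : {set T2} := [set y | inr y \in S].

Lemma parallel_refl {T1 T2 : finType} {r1 : rel T1} {r2 : rel T2} :
  reflexive r1 -> reflexive r2 -> reflexive (parallel r1 r2).
Proof. by move=> h1 h2 [x|y] /=. Qed.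

Lemma series_refl {T1 T2 : finType} {r1 : rel T1} {r2 : rel T2} :
  reflexive r1 -> reflexive r2 -> reflexive (series r1 r2).
Proof. by move=> h1 h2 [x|y] /=. Qed.

Lemma gv_parallel {T1 T2 : finType} (r1 : rel T1) (r2 : rel T2)
  (h1 : reflexive r1) (h2 : reflexive r2) (S : {set T1 + T2}) :
  gv (parallel r1 r2) S = Nat.lxor (gv r1 (SL S)) (gv r2 (SR S)).
Proof.
have hr := parallel_refl h1 h2.
move: (leqnn #|S|); move: {2}#|S| => n; elim: n S => [|n IH] S HS.
  have E : S = set0 by apply/eqP; rewrite -cards_eq0; lia.
  have -> : SL S = set0 by apply/setP => x; rewrite E !inE.
  have -> : SR S = set0 by apply/setP => x; rewrite E !inE.
  by rewrite E !gv0.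
have EL : forall x, SL (S :\: up (parallel r1 r2) (inl x)) = SL S :\: up r1 x /\
                    SR (S :\: up (parallel r1 r2) (inl x)) = SR S.
  by move=> x; split; apply/setP => y; rewrite !inE.
have ER : forall y, SL (S :\: up (parallel r1 r2) (inr y)) = SL S /\
                    SR (S :\: up (parallel r1 r2) (inr y)) = SR S :\: up r2 y.
  by move=> y; split; apply/setP => z; rewrite !inE.
have IH' : forall z, z \in S -> gv (parallel r1 r2) (S :\: up (parallel r1 r2) z) =
    Nat.lxor (gv r1 (SL (S :\: up (parallel r1 r2) z))) (gv r2 (SR (S :\: up (parallel r1 r2) z))).
  by move=> z zS; apply: IH; rewrite -ltnS (leq_trans (card_move hr zS) HS).
apply: (gvP hr).
- move=> [x|y] zS; rewrite (IH' _ zS).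
  + case: (EL x) => -> ->; apply/eqP => /lxor_inj_r /eqP.
    apply/negP; apply: (gv_opt_ne h1); by rewrite inE.
  + case: (ER y) => -> ->; apply/eqP => /lxor_inj_l /eqP.
    apply/negP; apply: (gv_opt_ne h2); by rewrite inE.
- move=> m /ltP /xor_lt [/ltP H|/ltP H].
  + case: (gv_opt h1 _ _ H) => x; rewrite inE => xS Ex.
    exists (inl x) => //; rewrite (IH' _ xS); case: (EL x) => -> ->; rewrite Ex.
    rewrite Nat.lxor_assoc Nat.lxor_nilpotent; exact: Nat.lxor_0_r.
  + case: (gv_opt h2 _ _ H) => y; rewrite inE => yS Ey.
    exists (inr y) => //; rewrite (IH' _ yS); case: (ER y) => -> ->; rewrite Ey.
    rewrite -Nat.lxor_assoc Nat.lxor_nilpotent Nat.lxor_comm; exact: Nat.lxor_0_r.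
Qed.

Lemma gv_series_chain {T1 : finType} (r1 : rel T1) (h1 : reflexive r1) m
  (S : {set T1 + 'I_m}) :
  gv (series r1 (chain m)) S = #|SR S| + gv r1 (SL S).
Proof.
have hr := series_refl h1 (chain_refl m).
move: (leqnn #|S|); move: {2}#|S| => n; elim: n S => [|n IH] S HS.
  have E : S = set0 by apply/eqP; rewrite -cards_eq0; lia.
  have -> : SL S = set0 by apply/setP => x; rewrite E !inE.
  have -> : SR S = set0 by apply/setP => x; rewrite E !inE.
  by rewrite E !gv0 ?cards0.
have EL : forall x, SL (S :\: up (series r1 (chain m)) (inl x)) = SL S :\: up r1 x /\
                    SR (S :\: up (series r1 (chain m)) (inl x)) = SR S.
  by move=> x; split; apply/setP => y; rewrite !inE.
have ER : forall y, SL (S :\: up (series r1 (chain m)) (inr y)) = set0 /\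
                    SR (S :\: up (series r1 (chain m)) (inr y)) = SR S :\: up (chain m) y.
  by move=> y; split; apply/setP => z; rewrite !inE.
have IH' : forall z, z \in S -> gv (series r1 (chain m)) (S :\: up (series r1 (chain m)) z) =
    #|SR (S :\: up (series r1 (chain m)) z)| + gv r1 (SL (S :\: up (series r1 (chain m)) z)).
  by move=> z zS; apply: IH; rewrite -ltnS (leq_trans (card_move hr zS) HS).
apply: (gvP hr).
- move=> [x|y] zS; rewrite (IH' _ zS).
  + case: (EL x) => -> ->; rewrite eqn_add2l.
    apply: (gv_opt_ne h1); by rewrite inE.
  + case: (ER y) => -> ->; rewrite (gv0 h1) addn0.
    have yS : y \in SR S by rewrite inE.
    have := card_move (chain_refl m) yS; rewrite neq_ltn => H.
    by rewrite (leq_trans H) ?leq_addr.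
- move=> k Hk; case: (ltnP k #|SR S|) => Hk2.
  + have yS : exists2 y, y \in SR S & gv (chain m) (SR S :\: up (chain m) y) = k.
      by apply: (gv_opt (chain_refl m)); rewrite gv_chain.
    case: yS => y yS Ey; exists (inr y); first by move: yS; rewrite inE.
    rewrite (IH' (inr y)) ?(ER y).1 ?(ER y).2 ?(gv0 h1) ?addn0 -?gv_chain //.
    by move: yS; rewrite inE.
  + have H : k - #|SR S| < gv r1 (SL S) by lia.
    case: (gv_opt h1 _ _ H) => x; rewrite inE => xS Ex.
    exists (inl x) => //; rewrite (IH' _ xS); case: (EL x) => -> ->; rewrite Ex.
    lia.
Qed.

Lemma g_parallel {T1 T2 : finType} (r1 : rel T1) (r2 : rel T2)
  (h1 : reflexive r1) (h2 : reflexive r2) :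
  g (parallel r1 r2) = Nat.lxor (g r1) (g r2).
Proof.
rewrite !g_gv gv_parallel //.
have -> : SL [set: T1 + T2] = setT by apply/setP => x; rewrite !inE.
have -> : SR [set: T1 + T2] = setT by apply/setP => x; rewrite !inE.
by [].
Qed.

Lemma g_series_chain {T1 : finType} (r1 : rel T1) (h1 : reflexive r1) m :
  g (series r1 (chain m)) = m + g r1.
Proof.
rewrite !g_gv gv_series_chain //.
have -> : SL [set: T1 + 'I_m] = setT by apply/setP => x; rewrite !inE.
have -> : SR [set: T1 + 'I_m] = setT by apply/setP => x; rewrite !inE.
by rewrite cardsT card_ord.
Qed.

Lemma g_chain m : g (chain m) = m.
Proof. by rewrite g_gv gv_chain cardsT card_ord. Qed.

Theorem mainTheorem7 (T : finType) (le : rel T)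
  (le_refl : reflexive le) (le_anti : antisymmetric le) (le_trans : transitive le)
  (k : nat) (hk : #|T| <= 2 ^ k) :
  (g le != 0 -> g (negA le k) = 0) /\
  (g le = 0 -> g (negA le k) = 2 ^ k.+1) /\
  ((g (negA le k) == 0) = (g le != 0)).
Proof.
have r1 : reflexive (series le (chain (2 ^ k - 1))) := series_refl le_refl (chain_refl _).
have r2 : reflexive (parallel (series le (chain (2 ^ k - 1))) (chain (2 ^ k))) :=
  parallel_refl r1 (chain_refl _).
have r3 : reflexive (series (parallel (series le (chain (2 ^ k - 1))) (chain (2 ^ k))) (chain 1)) :=
  series_refl r2 (chain_refl _).
have E : g (negA le k) = Nat.lxor (1 + Nat.lxor ((2 ^ k - 1) + g le) (2 ^ k)) (g le).
  by rewrite /negA (g_parallel _ _ r3 le_refl) (g_series_chain _ r2)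
    (g_parallel _ _ r1 (chain_refl _)) g_chain (g_series_chain _ le_refl).
have Ha : g le <= 2 ^ k.
  by rewrite g_gv; apply: leq_trans (gv_le_card le_refl _) _; rewrite cardsT.
have Ha' : (g le <= Nat.pow 2 k)%coq_nat by rewrite -expE; apply/leP.
have [F0 F1] := final_arith k (g le) Ha'.
rewrite E expE.
have A1 : g le != 0 -> Nat.lxor (1 + Nat.lxor (Nat.pow 2 k - 1 + g le) (Nat.pow 2 k)) (g le) = 0.
  by move=> /eqP H; apply: F1.
have A0 : g le = 0 -> Nat.lxor (1 + Nat.lxor (Nat.pow 2 k - 1 + g le) (Nat.pow 2 k)) (g le) = 2 ^ k.+1.
  by move=> H; rewrite expE; apply: F0.
split; [exact: A1|split; [exact: A0|]].
case: (eqVneq (g le) 0) => H.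
  by rewrite (A0 H) expn_eq0.
by rewrite (A1 H).
Qed.
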